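(* Let $G=PL_\delta(\mathbb{R}_{+})$ and $H=\{f\in G : \lim_{x\to\infty} f(x)/x = 1\}$. Then the quotient group $G/H$ is torsion-free: if $g\in G$ and $g^r\in H$ for some positive integer $r$, then $g\in H$.
   Context: A homeomorphism $f$ of $[0,\infty)$ is piecewise linear if its set $B(f)$ of breakpoints (points where $f$ is not differentiable) is discrete and $f$ is affine on each complementary interval. Its set of slopes is $\Lambda(f)=\{f'(t): t\notin B(f)\}$; $\Lambda(f)$ is bounded if there is $K>1$ with $K^{-1}<|\lambda|<K$ for all $\lambda\in\Lambda(f)$. $PL_\delta(\mathbb{R}_{+})$ denotes the group (under composition) of piecewise-linear homeomorphisms of $[0,\infty)$ with bounded set of slopes. $H$ is a normal subgroup of $G$. *)

(* Defs.v *)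
From Stdlib Require Import Reals Lra List.
Open Scope R_scope.

Definition maps_nonneg (f : R -> R) : Prop :=
  forall x, 0 <= x -> 0 <= f x.

Definition cont_on_nonneg (f : R -> R) : Prop :=
  forall x, 0 <= x -> forall eps, 0 < eps ->
    exists delta, 0 < delta /\
      forall y, 0 <= y -> Rabs (y - x) < delta -> Rabs (f y - f x) < eps.

Definition homeo_nonneg (f : R -> R) : Prop :=
  maps_nonneg f /\ cont_on_nonneg f /\
  exists h : R -> R, maps_nonneg h /\ cont_on_nonneg h /\
    (forall x, 0 <= x -> h (f x) = x) /\
    (forall y, 0 <= y -> f (h y) = y).

Definition affine_on (f : R -> R) (a b : R) : Prop :=
  exists m c, forall x, a <= x <= b -> f x = m * x + c.

(* Piecewise linear on [0,oo) with discrete breakpoint set: every bounded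
   interval [0,M] is cut by finitely many points into intervals on which f
   is affine.  The list [l] is the strictly increasing sequence of cut points
   0 = t_0 < t_1 < ... < t_n = M. *)
Fixpoint affine_chain (f : R -> R) (a : R) (l : list R) (M : R) : Prop :=
  match l with
  | nil => a = M
  | t :: l' => a < t /\ affine_on f a t /\ affine_chain f t l' M
  end.

Definition piecewise_linear (f : R -> R) : Prop :=
  forall M, 0 < M -> exists l : list R, affine_chain f 0 l M.

(* The set of slopes Lambda(f) = { f'(t) : t not a breakpoint } (t > 0) is
   bounded: K^-1 < |lambda| < K. *)
Definition bounded_slopes (f : R -> R) : Prop :=
  exists K, 1 < K /\
    forall t l, 0 < t -> derivable_pt_lim f t l -> / K < Rabs l < K.

Definition PLdelta (f : R -> R) : Prop :=
  homeo_nonneg f /\ piecewise_linear f /\ bounded_slopes f.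

Definition inH (f : R -> R) : Prop :=
  PLdelta f /\
  forall eps, 0 < eps -> exists N, forall x, N < x -> Rabs (f x / x - 1) < eps.

Fixpoint iter_comp (r : nat) (g : R -> R) : R -> R :=
  match r with
  | O => fun x => x
  | S r' => fun x => g (iter_comp r' g x)
  end.

(* Main.v *)
Require Import Defs.
From Stdlib Require Import Reals Lra.
Open Scope R_scope.

Lemma rmax_lip : forall x y, Rabs (Rmax 0 y - Rmax 0 x) <= Rabs (y - x).
Proof.
  intros x y. unfold Rmax.
  destruct (Rle_dec 0 y); destruct (Rle_dec 0 x); split_Rabs; lra.
Qed.

Lemma ext_cont : forall g, cont_on_nonneg g -> continuity (fun t => g (Rmax 0 t)).
Proof.
  intros g Hc x. unfold continuity_pt, continue_in, limit1_in, limit_in.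
  intros eps Heps. simpl. unfold R_dist.
  assert (H0 : 0 <= Rmax 0 x) by apply Rmax_l.
  destruct (Hc _ H0 eps Heps) as [d [Hd Hd']].
  exists d; split; [lra|]. intros y [_ Hy].
  apply Hd'. apply Rmax_l. eapply Rle_lt_trans; [apply rmax_lip|exact Hy].
Qed.

Lemma ivt_g : forall g, cont_on_nonneg g -> forall a b z, 0 <= a <= b ->
  Rmin (g a) (g b) <= z <= Rmax (g a) (g b) -> exists d, a <= d <= b /\ g d = z.
Proof.
  intros g Hc a b z [Ha Hab] Hz.
  set (F := fun t => g (Rmax 0 t) - z).
  assert (HF : continuity F).
  { unfold F. apply continuity_minus. apply ext_cont; auto. apply continuity_const. intros u v; auto. }
  assert (Fa : F a = g a - z) by (unfold F; rewrite Rmax_right; lra).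
  assert (Fb : F b = g b - z) by (unfold F; rewrite Rmax_right; lra).
  destruct (IVT_cor F a b HF Hab) as [d [Hd Fd]].
  { rewrite Fa, Fb. revert Hz. unfold Rmin, Rmax.
    destruct (Rle_dec (g a) (g b)); intros; nra. }
  exists d; split; auto. unfold F in Fd. rewrite Rmax_right in Fd; lra.
Qed.

Lemma homeo_incr : forall g, homeo_nonneg g -> forall x y, 0 <= x -> x < y -> g x < g y.
Proof.
  intros g [Hm [Hc [h [Hhm [_ [Hhg Hgh]]]]]].
  assert (inj : forall d e, 0 <= d -> 0 <= e -> g d = g e -> d = e).
  { intros d e Hd He E. rewrite <- (Hhg d Hd), <- (Hhg e He), E. reflexivity. }
  assert (g0 : g 0 = 0).
  { destruct (Rle_lt_dec (g 0) 0) as [Hle|Hlt].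
    - pose proof (Hm 0 (Rle_refl 0)); lra.
    - exfalso. set (c := h 0).
      assert (Hc0 : 0 <= c) by (apply Hhm; lra).
      assert (gc : g c = 0) by (apply Hgh; lra).
      assert (cpos : 0 < c).
      { destruct Hc0 as [?|E]; auto. rewrite <- E in gc. lra. }
      assert (gy : 0 <= g (c+1)) by (apply Hm; lra).
      destruct (Rle_lt_dec (g (c+1)) (g 0)).
      + destruct (ivt_g g Hc 0 c (g (c+1))) as [d [Hd Ed]]; [lra| |].
        { rewrite gc. unfold Rmin, Rmax; destruct (Rle_dec (g 0) 0); lra. }
        assert (d = c+1) by (apply inj; lra). lra.
      + destruct (ivt_g g Hc c (c+1) (g 0)) as [d [Hd Ed]]; [lra| |].
        { rewrite gc. unfold Rmin, Rmax; destruct (Rle_dec 0 (g (c+1))); lra. }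
        assert (d = 0) by (apply inj; lra). lra. }
  intros x y Hx Hxy.
  destruct (Rlt_le_dec (g x) (g y)) as [?|Hle]; auto. exfalso.
  assert (gy : 0 <= g y) by (apply Hm; lra).
  destruct (ivt_g g Hc 0 x (g y)) as [d [Hd Ed]]; [lra| |].
  { rewrite g0. unfold Rmin, Rmax; destruct (Rle_dec 0 (g x)); lra. }
  assert (d = y) by (apply inj; lra). lra.
Qed.

Lemma homeo_mono : forall g, homeo_nonneg g -> forall x y, 0 <= x -> x <= y -> g x <= g y.
Proof.
  intros g Hg x y Hx [H|H]. left; apply homeo_incr; auto. subst; lra.
Qed.

Lemma iter_nonneg : forall g, maps_nonneg g -> forall n x, 0 <= x -> 0 <= iter_comp n g x.
Proof. intros g Hm n; induction n; simpl; intros; auto. Qed.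

Lemma iter_up : forall g, homeo_nonneg g -> forall x, 0 <= x -> x <= g x ->
  forall n, iter_comp n g x <= iter_comp (S n) g x /\ g x <= iter_comp (S n) g x.
Proof.
  intros g Hg x Hx Hgx n. induction n.
  - simpl. lra.
  - destruct IHn as [A B]. split.
    + change (g (iter_comp n g x) <= g (iter_comp (S n) g x)).
      apply homeo_mono; auto. apply iter_nonneg; auto. apply Hg.
    + assert (iter_comp (S n) g x <= iter_comp (S (S n)) g x).
      { change (g (iter_comp n g x) <= g (iter_comp (S n) g x)).
        apply homeo_mono; auto. apply iter_nonneg; auto. apply Hg. }
      lra.
Qed.

Lemma iter_down : forall g, homeo_nonneg g -> forall x, 0 <= x -> g x <= x ->
  forall n, iter_comp (S n) g x <= iter_comp n g x /\ iter_comp (S n) g x <= g x.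
Proof.
  intros g Hg x Hx Hgx n. induction n.
  - simpl. lra.
  - destruct IHn as [A B]. 
    assert (iter_comp (S (S n)) g x <= iter_comp (S n) g x).
    { change (g (iter_comp (S n) g x) <= g (iter_comp n g x)).
      apply homeo_mono; auto. apply iter_nonneg; auto. apply Hg. }
    split; lra.
Qed.

Theorem theorem2 :
  forall (g : R -> R) (r : nat),
    PLdelta g -> (0 < r)%nat -> inH (iter_comp r g) -> inH g.
Proof.
  intros g r Hg Hr [_ Hlim].
  split; auto.
  destruct r as [|r']; [inversion Hr|].
  assert (Hh : homeo_nonneg g) by apply Hg.
  intros eps Heps. destruct (Hlim eps Heps) as [N HN].
  exists (Rmax N 0). intros x Hx.
  assert (xN : N < x) by (eapply Rle_lt_trans; [apply Rmax_l|exact Hx]).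
  assert (x0 : 0 < x) by (eapply Rle_lt_trans; [apply Rmax_r|exact Hx]).
  specialize (HN x xN).
  set (f := iter_comp (S r') g) in *.
  apply Rabs_def2 in HN. destruct HN as [HN2 HN1].
  assert (E : forall u, u / x - 1 = (u - x) / x) by (intros; field; lra).
  rewrite E in HN1, HN2 |- *.
  assert (Hix : 0 < / x) by (apply Rinv_0_lt_compat; lra).
  unfold Rdiv in *.
  cut (- eps < (g x - x) * / x /\ (g x - x) * / x < eps).
  { intros [P Q]; apply Rabs_def1; auto. }
  split.
  - destruct (Rle_lt_dec (g x) x) as [Hle|Hlt].
    + destruct (iter_down g Hh x (Rlt_le _ _ x0) Hle r') as [_ B].
      fold f in B.
      assert ((f x - x) * / x <= (g x - x) * / x) by (apply Rmult_le_compat_r; lra).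
      lra.
    + assert (0 < (g x - x) * / x) by (apply Rmult_lt_0_compat; lra). lra.
  - destruct (Rle_lt_dec x (g x)) as [Hle|Hlt].
    + destruct (iter_up g Hh x (Rlt_le _ _ x0) Hle r') as [_ B].
      fold f in B.
      assert ((g x - x) * / x <= (f x - x) * / x) by (apply Rmult_le_compat_r; lra).
      lra.
    + assert ((g x - x) * / x < 0).
      { assert (0 < (x - g x) * / x) by (apply Rmult_lt_0_compat; lra). nra. }
      lra.
Qed.
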